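(* Assume the setting below (assumptions A1–A3, any step size $\alpha>0$). For every integer $k\ge 0$ let $$\Delta_k=\frac{L(\tau+1)}{2}\sum_{j=k-\tau}^{k}\|x_{j+1}-x_j\|^2 .$$ Then for every $k\ge 0$ and every $x\in\mathbb{R}^d$, $$\Phi(x_{k+1})\le \Phi(x)+\frac{1}{2\alpha}\|x-x_k\|^2-\frac{1}{2\alpha}\|x-x_{k+1}\|^2-\frac{1}{2\alpha}\|x_{k+1}-x_k\|^2+\Delta_k .$$
   Context: Problem: minimize $\Phi(x)=F(x)+h(x)$ over $x\in\mathbb{R}^d$, where $F(x)=\sum_{n=1}^N f_n(x)$. Assumption A1: each $f_n:\mathbb{R}^d\to\mathbb{R}$ is convex and differentiable with $\|\nabla f_n(x)-\nabla f_n(y)\|\le L_n\|x-y\|$ for all $x,y$; set $L=\sum_{n=1}^N L_n$. Assumption A2: $h:\mathbb{R}^d\to(-\infty,\infty]$ is proper, closed, convex, and $\partial h(x)\neq\emptyset$ for all $x$ in its effective domain. Assumption A3: the delays $\tau_k^n$ ($k\ge0$, $n=1,\dots,N$) are integers with $\tau_k^n\in\{0,1,\dots,\tau\}$ for a fixed nonnegative integer $\tau$ (the delay parameter). PIAG method: given $x_0\in\mathbb{R}^d$ and step size $\alpha>0$, with the convention $x_j=x_0$ for $j<0$, for $k\ge0$ set $g_k=\sum_{n=1}^N\nabla f_n(x_{k-\tau_k^n})$ and $$x_{k+1}=\arg\min_{x\in\mathbb{R}^d}\Big\{h(x)+\langle g_k,x-x_k\rangle+\frac{1}{2\alpha}\|x-x_k\|^2\Big\}.$$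 In particular $\|x_{j+1}-x_j\|=0$ for $j<0$. *)

(* Defs.v *)
From Stdlib Require Import Reals ZArith.
From mathcomp Require Import ssreflect ssrfun ssrbool eqtype ssrnat fintype bigop.

Set Implicit Arguments.
Unset Strict Implicit.
Unset Printing Implicit Defensive.

Local Open Scope R_scope.

Definition vec (d : nat) := 'I_d -> R.

Definition vzero {d} : vec d := fun _ => 0.
Definition vadd {d} (x y : vec d) : vec d := fun i => x i + y i.
Definition vsub {d} (x y : vec d) : vec d := fun i => x i - y i.
Definition vscale {d} (a : R) (x : vec d) : vec d := fun i => a * x i.

Definition inner {d} (x y : vec d) : R := \big[Rplus/0]_(i < d) (x i * y i).
Definition norm {d} (x : vec d) : R := sqrt (inner x x).

Inductive ereal := Fin (r : R) | PInf.

Definition ele (a b : ereal) : Prop :=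
  match a, b with
  | _, PInf => True
  | PInf, Fin _ => False
  | Fin x, Fin y => x <= y
  end.

Definition elt (a b : ereal) : Prop :=
  match a, b with
  | Fin x, PInf => True
  | PInf, _ => False
  | Fin x, Fin y => x < y
  end.

Definition eplus (a b : ereal) : ereal :=
  match a, b with
  | Fin x, Fin y => Fin (x + y)
  | _, _ => PInf
  end.

Definition convex_fun {d} (f : vec d -> R) : Prop :=
  forall (x y : vec d) (t : R), 0 <= t <= 1 ->
    f (vadd (vscale t x) (vscale (1 - t) y)) <= t * f x + (1 - t) * f y.

Definition has_gradient {d} (f : vec d -> R) (x g : vec d) : Prop :=
  forall eps, 0 < eps -> exists delta, 0 < delta /\
    forall y, norm (vsub y x) < delta ->
      Rabs (f y - f x - inner g (vsub y x)) <= eps * norm (vsub y x).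

Definition proper_fun {d} (h : vec d -> ereal) : Prop :=
  exists x, h x <> PInf.

Definition convex_efun {d} (h : vec d -> ereal) : Prop :=
  forall (x y : vec d) (a b t : R), h x = Fin a -> h y = Fin b -> 0 <= t <= 1 ->
    ele (h (vadd (vscale t x) (vscale (1 - t) y))) (Fin (t * a + (1 - t) * b)).

(* closed = lower semicontinuous everywhere *)
Definition closed_fun {d} (h : vec d -> ereal) : Prop :=
  forall (x : vec d) (c : R), elt (Fin c) (h x) ->
    exists delta, 0 < delta /\
      forall y, norm (vsub y x) < delta -> elt (Fin c) (h y).

Definition subdiff_nonempty {d} (h : vec d -> ereal) : Prop :=
  forall (x : vec d) (a : R), h x = Fin a ->
    exists g : vec d, forall y, ele (Fin (a + inner g (vsub y x))) (h y).

Definition Fsum {d N} (f : 'I_N -> vec d -> R) (x : vec d) : R :=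
  \big[Rplus/0]_(n < N) f n x.

Definition Phi {d N} (f : 'I_N -> vec d -> R) (h : vec d -> ereal) (x : vec d)
  : ereal := eplus (Fin (Fsum f x)) (h x).

(* PIAG aggregated delayed gradient g_k (x_j = x_0 for j < 0 is automatic
   since nat subtraction truncates at 0) *)
Definition piag_grad {d N} (gradf : 'I_N -> vec d -> vec d)
  (tau_k : nat -> 'I_N -> nat) (x : nat -> vec d) (k : nat) : vec d :=
  \big[vadd/vzero]_(n < N) gradf n (x (k - tau_k k n)%N).

Definition piag_step {d N} (h : vec d -> ereal) (gradf : 'I_N -> vec d -> vec d)
  (tau_k : nat -> 'I_N -> nat) (alpha : R) (x : nat -> vec d) : Prop :=
  forall (k : nat) (z : vec d),
    ele (eplus (h (x k.+1))
          (Fin (inner (piag_grad gradf tau_k x k) (vsub (x k.+1) (x k))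
                + / (2 * alpha) * norm (vsub (x k.+1) (x k)) ^ 2)))
        (eplus (h z)
          (Fin (inner (piag_grad gradf tau_k x k) (vsub z (x k))
                + / (2 * alpha) * norm (vsub z (x k)) ^ 2))).

Definition xZ {d} (x : nat -> vec d) (j : Z) : vec d :=
  if (j <? 0)%Z then x 0%N else x (Z.to_nat j).

(* Delta_k = L(tau+1)/2 * sum_{j=k-tau}^{k} ||x_{j+1}-x_j||^2 ;
   the sum is written with i = k - j ranging over 0..tau *)
Definition piag_Delta {d} (L : R) (tau : nat) (x : nat -> vec d) (k : nat) : R :=
  L * (INR tau + 1) / 2 *
  sum_f_R0 (fun i => norm (vsub (xZ x (Z.of_nat k - Z.of_nat i + 1))
                                 (xZ x (Z.of_nat k - Z.of_nat i))) ^ 2) tau.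

(* Main.v *)
Require Import Defs.
From Stdlib Require Import Reals ZArith Lra Lia FunctionalExtensionality.
From mathcomp Require Import ssreflect ssrfun ssrbool eqtype ssrnat seq fintype bigop.
From HB Require Import structures.
From mathcomp Require Import zify.
Local Open Scope R_scope.
Set Implicit Arguments.
Unset Strict Implicit.

HB.instance Definition _ := Monoid.isComLaw.Build R 0 Rplus
  (fun a b c => esym (Rplus_assoc a b c)) Rplus_comm Rplus_0_l.

Lemma vext d (u v : vec d) : (forall i, u i = v i) -> u = v.
Proof. move=> H; apply: functional_extensionality => i; exact: H. Qed.

Lemma sum_le (I : Type) (r : seq I) (F G : I -> R) :
  (forall i, F i <= G i) -> \big[Rplus/0]_(i <- r) F i <= \big[Rplus/0]_(i <- r) G i.
Proof.
move=> H; apply: (big_ind2 (fun a b => a <= b)); first exact: Rle_refl.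
  by move=> *; apply: Rplus_le_compat.
by move=> i _; apply: H.
Qed.

Lemma sum_scal (I : Type) (r : seq I) (F : I -> R) c :
  c * \big[Rplus/0]_(i <- r) F i = \big[Rplus/0]_(i <- r) (c * F i).
Proof.
exact: (big_morph (fun s => c * s) (fun x y => Rmult_plus_distr_l c x y) (Rmult_0_r c)).
Qed.

Lemma inner_addl d (u w v : vec d) : inner (vadd u w) v = inner u v + inner w v.
Proof. rewrite /inner -big_split; apply: eq_bigr => i _; rewrite /vadd /=. ring. Qed.

Lemma inner_comm d (u v : vec d) : inner u v = inner v u.
Proof. rewrite /inner; apply: eq_bigr => i _; ring. Qed.

Lemma inner_addr d (u w v : vec d) : inner v (vadd u w) = inner v u + inner v w.
Proof. by rewrite inner_comm inner_addl !(inner_comm v). Qed.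

Lemma inner_scalel d a (u v : vec d) : inner (vscale a u) v = a * inner u v.
Proof. rewrite /inner sum_scal; apply: eq_bigr => i _; rewrite /vscale; ring. Qed.

Lemma inner_scaler d a (u v : vec d) : inner v (vscale a u) = a * inner v u.
Proof. by rewrite inner_comm inner_scalel inner_comm. Qed.

Lemma inner_ge0 d (v : vec d) : 0 <= inner v v.
Proof.
rewrite /inner; apply: (big_ind (fun s => 0 <= s)); first exact: Rle_refl.
  by move=> *; lra.
by move=> i _; nra.
Qed.

Lemma norm_ge0 d (v : vec d) : 0 <= norm v.
Proof. exact: sqrt_pos. Qed.

Lemma norm_sq d (v : vec d) : norm v ^ 2 = inner v v.
Proof. rewrite /norm pow2_sqrt //; exact: inner_ge0. Qed.

Lemma young d (u v : vec d) s : 0 < s ->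
  2 * inner u v <= s * inner u u + / s * inner v v.
Proof.
move=> Hs.
have -> : s * inner u u + / s * inner v v =
  \big[Rplus/0]_(i < d) (s * (u i * u i) + / s * (v i * v i)).
  by rewrite big_split /= -!sum_scal.
rewrite /inner sum_scal; apply: sum_le => i.
have H : 0 <= (s * u i - v i) ^ 2 * / s.
  apply: Rmult_le_pos; [apply: pow2_ge_0 | apply: Rlt_le; exact: Rinv_0_lt_compat].
have E : (s * u i - v i) ^ 2 * / s = s * (u i * u i) + / s * (v i * v i) - 2 * (u i * v i).
  field; lra.
lra.
Qed.

Lemma cs d (u v : vec d) : inner u v <= norm u * norm v.
Proof.
have Hu := norm_sq u; have Hv := norm_sq v.
have Hu0 := norm_ge0 u; have Hv0 := norm_ge0 v.
have zero_case : forall a b : vec d, norm a = 0 -> inner a b <= 0.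
  move=> a b Ha.
  have Ha2 : inner a a = 0 by rewrite -norm_sq Ha; ring.
  case: (Rle_lt_dec (inner a b) 0) => // Hab.
  have Hb := inner_ge0 b.
  have Hs : 0 < (inner b b + 1) / inner a b.
    apply: Rdiv_lt_0_compat; lra.
  have := young a b Hs.
  rewrite Ha2 Rmult_0_r Rplus_0_l.
  have -> : / ((inner b b + 1) / inner a b) * inner b b
     = inner a b * (inner b b / (inner b b + 1)) by field; lra.
  have : inner b b / (inner b b + 1) < 1.
    have -> : inner b b / (inner b b + 1) = 1 - / (inner b b + 1) by field; lra.
    have : 0 < / (inner b b + 1) by apply: Rinv_0_lt_compat; lra.
    lra.
  move=> H1 H2. nra.
case: (Req_dec (norm u) 0) => Hu1.
  rewrite Hu1 Rmult_0_l; exact: zero_case.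
case: (Req_dec (norm v) 0) => Hv1.
  rewrite Hv1 Rmult_0_r inner_comm; exact: zero_case.
have Hs : 0 < norm v / norm u by apply: Rdiv_lt_0_compat; lra.
have := young u v Hs.
rewrite -Hu -Hv.
have -> : norm v / norm u * norm u ^ 2 + / (norm v / norm u) * norm v ^ 2
   = 2 * (norm u * norm v) by field; lra.
lra.
Qed.

Lemma norm_scale d t (v : vec d) : norm (vscale t v) = Rabs t * norm v.
Proof.
rewrite /norm inner_scalel inner_scaler -Rmult_assoc.
rewrite sqrt_mult; [| nra | exact: inner_ge0].
by rewrite -/(Rsqr t) sqrt_Rsqr_abs.
Qed.

Lemma inner_subl d (u w v : vec d) : inner (vsub u w) v = inner u v - inner w v.
Proof.
have -> : u = vadd (vsub u w) w by apply: vext => i; rewrite /vadd /vsub; ring.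
rewrite inner_addl; have -> : vsub (vadd (vsub u w) w) w = vsub u w.
  by apply: vext => i; rewrite /vadd /vsub; ring.
ring.
Qed.

Lemma abs_le a b : Rabs a <= b -> - b <= a <= b.
Proof. move=> H; have := Rle_abs a; have := Rle_abs (- a); rewrite Rabs_Ropp; lra. Qed.

Lemma grad_ineq d (f : vec d -> R) g x y :
  convex_fun f -> has_gradient f x g -> f x + inner g (vsub y x) <= f y.
Proof.
move=> Hc Hg.
set v := vsub y x.
case: (Rle_lt_dec (inner g v - (f y - f x)) 0) => HA; first lra.
set A := inner g v - (f y - f x) in HA.
have Hnv := norm_ge0 v; set nv := norm v in Hnv.
set eps := A / (2 * (nv + 1)).
have Heps : 0 < eps by apply: Rdiv_lt_0_compat; lra.
have Henv : eps * nv < A.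
  have E : eps * (2 * (nv + 1)) = A by rewrite /eps; field; lra.
  nra.
case: (Hg eps Heps) => delta [Hd Hdel].
set t := Rmin 1 (delta / (2 * (nv + 1))).
have Ht0 : 0 < t.
  apply: Rmin_pos; first lra. apply: Rdiv_lt_0_compat; lra.
have Ht1 : t <= 1 by apply: Rmin_l.
have Ht2 : t * (2 * (nv + 1)) <= delta.
  have := Rmin_r 1 (delta / (2 * (nv + 1))); rewrite -/t => H.
  have E : delta / (2 * (nv + 1)) * (2 * (nv + 1)) = delta by field; lra.
  nra.
set p := vadd (vscale t y) (vscale (1 - t) x).
have Hp : vsub p x = vscale t v.
  by apply: vext => i; rewrite /p /v /vsub /vadd /vscale; ring.
have Hconv := Hc y x t (conj (Rlt_le _ _ Ht0) Ht1); rewrite -/p in Hconv.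
have Hn : norm (vsub p x) = t * nv.
  by rewrite Hp norm_scale Rabs_pos_eq; [| lra].
have := Hdel p; rewrite Hn => Hd2.
have Hd3 : t * nv < delta by nra.
have := Hd2 Hd3; rewrite Hp inner_scaler => Habs.
have := abs_le Habs => -[H1 H2].
have K1 : t * (inner g v - (f y - f x)) <= t * (eps * nv) by lra.
have K2 : t * (eps * nv) < t * A by apply: Rmult_lt_compat_l.
rewrite /A in K2; lra.
Qed.

Lemma polyd c1 c2 t : derivable_pt_lim (fun t => t * c1 + c2 * (t * t)) t (c1 + c2 * (2 * t)).
Proof.
have H1 := derivable_pt_lim_mult (fun s : R => s) (fct_cte c1) t 1 0 (derivable_pt_lim_id t) (derivable_pt_lim_const c1 t).
have H2 := derivable_pt_lim_mult (fun s : R => s) (fun s : R => s) t 1 1 (derivable_pt_lim_id t) (derivable_pt_lim_id t).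
have H3 := derivable_pt_lim_mult (fct_cte c2) (mult_fct (fun s : R => s) (fun s : R => s)) t 0 _ (derivable_pt_lim_const c2 t) H2.
have H4 := derivable_pt_lim_plus _ _ t _ _ H1 H3.
unfold plus_fct, mult_fct, fct_cte in H4 |- *.
match type of H4 with derivable_pt_lim _ _ ?l => replace (c1 + c2 * (2 * t)) with l by ring end.
exact H4.
Qed.

Definition line d (x v : vec d) (t : R) : vec d := vadd x (vscale t v).

Lemma line_deriv d (f : vec d -> R) (gf : vec d -> vec d) x v t :
  (forall p, has_gradient f p (gf p)) ->
  derivable_pt_lim (fun s => f (line x v s)) t (inner (gf (line x v t)) v).
Proof.
move=> Hg eps Heps.
have Hnv := norm_ge0 v; set nv := norm v in Hnv.
set eps' := eps / (2 * (nv + 1)).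
have Heps' : 0 < eps' by apply: Rdiv_lt_0_compat; lra.
have Henv : eps' * nv < eps.
  have E : eps' * (2 * (nv + 1)) = eps by rewrite /eps'; field; lra.
  nra.
case: (Hg (line x v t) eps' Heps') => delta [Hd Hdel].
have Hdp : 0 < delta / (nv + 1) by apply: Rdiv_lt_0_compat; lra.
exists (mkposreal _ Hdp) => h Hh0 Hh /=.
simpl in Hh.
have Hdiff : vsub (line x v (t + h)) (line x v t) = vscale h v.
  by apply: vext => i; rewrite /line /vsub /vadd /vscale; ring.
have Hah : 0 < Rabs h by apply: Rabs_pos_lt.
have Hn : norm (vsub (line x v (t + h)) (line x v t)) < delta.
  rewrite Hdiff norm_scale -/nv.
  have E : delta / (nv + 1) * (nv + 1) = delta by field; lra.
  nra.
have := Hdel _ Hn; rewrite Hdiff inner_scaler norm_scale -/nv => Habs.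
set a := f (line x v (t + h)) - f (line x v t) - h * inner (gf (line x v t)) v in Habs.
have -> : (f (line x v (t + h)) - f (line x v t)) / h - inner (gf (line x v t)) v = a * / h.
  by rewrite /a; field.
rewrite Rabs_mult Rabs_inv.
apply: (Rle_lt_trans _ (eps' * nv)); last exact Henv.
have E : eps' * (Rabs h * nv) * / Rabs h = eps' * nv by field; lra.
rewrite -E; apply: Rmult_le_compat_r; last exact Habs.
apply: Rlt_le; exact: Rinv_0_lt_compat.
Qed.

Lemma descent d (f : vec d -> R) (gf : vec d -> vec d) Lf x y :
  (forall p, has_gradient f p (gf p)) ->
  (forall p q, norm (vsub (gf p) (gf q)) <= Lf * norm (vsub p q)) ->
  f y <= f x + inner (gf x) (vsub y x) + Lf / 2 * norm (vsub y x) ^ 2.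
Proof.
move=> Hg Hl.
set v := vsub y x.
set c1 := inner (gf x) v.
set c2 := Lf / 2 * norm v ^ 2.
set psi := fun s => f (line x v s) - (s * c1 + c2 * (s * s)).
have Hd : forall s, derivable_pt_lim psi s
    (inner (gf (line x v s)) v - (c1 + c2 * (2 * s))).
  move=> s; apply: derivable_pt_lim_minus; [exact: line_deriv | exact: polyd].
pose pr : derivable psi := fun s => exist _ _ (Hd s).
have [c [Hc Hc01]] := MVT_cor1 psi 0 1 pr Rlt_0_1.
rewrite (derive_pt_eq_0 _ _ _ (pr c) (Hd c)) in Hc.
have E1 : line x v 1 = y by apply: vext => i; rewrite /line /v /vadd /vscale /vsub; ring.
have E0 : line x v 0 = x by apply: vext => i; rewrite /line /vadd /vscale; ring.
rewrite /psi E1 E0 in Hc.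
have Hlc : vsub (line x v c) x = vscale c v.
  by apply: vext => i; rewrite /line /vadd /vscale /vsub; ring.
have K1 : inner (gf (line x v c)) v - c1 <= Lf * c * (norm v * norm v).
  rewrite /c1 -inner_subl.
  apply: (Rle_trans _ _ _ (cs _ _)).
  have := Hl (line x v c) x; rewrite Hlc norm_scale Rabs_pos_eq; last lra.
  have := norm_ge0 v; move=> Hv H.
  have : norm (vsub (gf (line x v c)) (gf x)) * norm v <= Lf * (c * norm v) * norm v.
    by apply: Rmult_le_compat_r.
  lra.
have K2 : c2 * (2 * c) = Lf * c * (norm v * norm v) by rewrite /c2; field.
have K3 : f y - (1 * c1 + c2 * (1 * 1)) - (f x - (0 * c1 + c2 * (0 * 0))) <= 0.
  rewrite Hc; nra.
rewrite -/v -/c1 -/c2; lra.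
Qed.

Lemma xZ_pos d (x : nat -> vec d) z n : (0 <= z)%Z -> Z.to_nat z = n -> xZ x z = x n.
Proof.
move=> Hz Hn; rewrite /xZ.
have -> : (z <? 0)%Z = false by apply/Z.ltb_ge.
by rewrite Hn.
Qed.

Lemma xZ_nat d (x : nat -> vec d) k m : xZ x (Z.of_nat k - Z.of_nat m) = x (k - m)%N.
Proof.
rewrite /xZ; case: (Z.ltb_spec (Z.of_nat k - Z.of_nat m) 0) => H.
  have -> : (k - m)%N = 0%N by lia.
  by [].
f_equal; lia.
Qed.

Definition Dx d (x : nat -> vec d) k i :=
  vsub (xZ x (Z.of_nat k - Z.of_nat i + 1)) (xZ x (Z.of_nat k - Z.of_nat i)).

Lemma sq_add d (a b : vec d) s : 0 < s ->
  inner (vadd a b) (vadd a b) <= (1 + s) * inner a a + (1 + / s) * inner b b.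
Proof.
move=> Hs; rewrite !inner_addl !inner_addr (inner_comm b a).
have := young a b Hs; lra.
Qed.

Lemma sum_S (F : nat -> R) m : sum_f_R0 F m.+1 = sum_f_R0 F m + F m.+1.
Proof. by []. Qed.

Lemma sum_0 (F : nat -> R) : sum_f_R0 F 0 = F 0%N.
Proof. by []. Qed.

Lemma tele d (x : nat -> vec d) k m :
  inner (vsub (x k.+1) (x (k - m)%N)) (vsub (x k.+1) (x (k - m)%N))
  <= (INR m + 1) * sum_f_R0 (fun i => norm (Dx x k i) ^ 2) m.
Proof.
elim: m => [|m IH].
  have -> : vsub (x k.+1) (x (k - 0)%N) = Dx x k 0.
    rewrite /Dx xZ_nat (@xZ_pos _ _ _ k.+1); [|lia|lia].
    by [].
  rewrite sum_0 norm_sq /=; lra.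
have E : vsub (x k.+1) (x (k - m.+1)%N) = vadd (vsub (x k.+1) (x (k - m)%N)) (Dx x k m.+1).
  rewrite /Dx xZ_nat.
  have -> : (Z.of_nat k - Z.of_nat m.+1 + 1 = Z.of_nat k - Z.of_nat m)%Z by lia.
  rewrite xZ_nat.
  by apply: vext => i; rewrite /vadd /vsub; ring.
rewrite E.
have Hm : 0 < INR m + 1 by have := pos_INR m; lra.
have Hs : 0 < / (INR m + 1) by apply: Rinv_0_lt_compat.
apply: (Rle_trans _ _ _ (sq_add _ _ Hs)).
rewrite Rinv_inv S_INR sum_S norm_sq.
set S := sum_f_R0 _ m in IH *.
have E2 : (1 + / (INR m + 1)) * ((INR m + 1) * S) = (INR m + 1 + 1) * S by field; lra.
have : (1 + / (INR m + 1)) * inner (vsub (x k.+1) (x (k - m)%N)) (vsub (x k.+1) (x (k - m)%N))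
   <= (1 + / (INR m + 1)) * ((INR m + 1) * S).
  apply: Rmult_le_compat_l; lra.
lra.
Qed.

Lemma sum_mono (F : nat -> R) m p : (forall i, 0 <= F i) ->
  sum_f_R0 F m <= sum_f_R0 F (m + p)%N.
Proof.
move=> H; elim: p => [|p IH]; first by rewrite addn0; lra.
rewrite addnS sum_S; have := H (m + p).+1; lra.
Qed.

Lemma le_eps A B C : (forall t, 0 < t <= 1 -> A <= B + t * C) -> A <= B.
Proof.
move=> H; case: (Rle_lt_dec A B) => // HAB; exfalso.
set t := Rmin 1 ((A - B) / (2 * (Rabs C + 1))).
have Hc := Rle_abs C; have Hc0 := Rabs_pos C.
have Ht0 : 0 < t by apply: Rmin_pos; [lra | apply: Rdiv_lt_0_compat; lra].
have Ht1 : t <= 1 by apply: Rmin_l.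
have Ht2 : t * (2 * (Rabs C + 1)) <= A - B.
  have := Rmin_r 1 ((A - B) / (2 * (Rabs C + 1))); rewrite -/t => K.
  have E : (A - B) / (2 * (Rabs C + 1)) * (2 * (Rabs C + 1)) = A - B by field; lra.
  nra.
have := H t (conj Ht0 Ht1).
nra.
Qed.

Lemma inner0 d (u : vec d) : inner vzero u = 0.
Proof. by rewrite /inner big1 // => i _; rewrite /vzero Rmult_0_l. Qed.

Lemma exp_sq d (a b : vec d) t :
  inner (vadd a (vscale t b)) (vadd a (vscale t b)) = inner a a + 2 * t * inner a b + t * t * inner b b.
Proof. rewrite !inner_addl !inner_addr !inner_scalel !inner_scaler (inner_comm b a); ring. Qed.

Lemma exp_lin d (g a b : vec d) t :
  inner g (vadd a (vscale t b)) = inner g a + t * inner g b.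
Proof. by rewrite inner_addr inner_scaler. Qed.

Lemma exp_sq2 d (a b : vec d) :
  inner (vadd a b) (vadd a b) = inner a a + 2 * inner a b + inner b b.
Proof. rewrite !inner_addl !inner_addr (inner_comm b a); ring. Qed.

Unset Implicit Arguments.
Set Strict Implicit.

Theorem lemma2 (d N : nat) (f : 'I_N -> vec d -> R) (gradf : 'I_N -> vec d -> vec d)
  (Ln : 'I_N -> R) (h : vec d -> ereal) (tau : nat) (tau_k : nat -> 'I_N -> nat)
  (alpha : R) (x : nat -> vec d)
  (* A1 *)
  (Hconv : forall n, convex_fun (f n))
  (Hgrad : forall n y, has_gradient (f n) y (gradf n y))
  (Hlip : forall n y z, norm (vsub (gradf n y) (gradf n z)) <= Ln n * norm (vsub y z))
  (* A2 *)
  (Hproper : proper_fun h) (Hclosed : closed_fun h) (Hhconv : convex_efun h)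
  (Hsub : subdiff_nonempty h)
  (* A3 *)
  (Htau : forall k n, (tau_k k n <= tau)%N)
  (* PIAG *)
  (Halpha : 0 < alpha)
  (Hstep : piag_step h gradf tau_k alpha x) :
  let L := \big[Rplus/0]_(n < N) Ln n in
  forall (k : nat) (y : vec d),
    ele (Phi f h (x k.+1))
        (eplus (Phi f h y)
           (Fin (/ (2 * alpha) * norm (vsub y (x k)) ^ 2
                 - / (2 * alpha) * norm (vsub y (x k.+1)) ^ 2
                 - / (2 * alpha) * norm (vsub (x k.+1) (x k)) ^ 2
                 + piag_Delta L tau x k))).
Proof.
move=> L k y.
rewrite /Phi.
case Hy: (h y) => [b|]; last by case: (h (x k.+1)).
case Hx1: (h (x k.+1)) => [a|]; last first.
  by have := Hstep k y; rewrite Hx1 Hy.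
set x1 := x k.+1 in Hx1 *.
set g := piag_grad gradf tau_k x k.
set kap := / (2 * alpha).
set e := vsub x1 (x k).
set w := vsub y x1.
have TP : a <= b + inner g w + 2 * kap * inner e w.
  apply: (@le_eps _ _ (kap * inner w w)) => t Ht.
  set zt := vadd (vscale t y) (vscale (1 - t) x1).
  have Hc := Hhconv y x1 b a t Hy Hx1 (conj (Rlt_le _ _ (proj1 Ht)) (proj2 Ht)).
  rewrite -/zt in Hc.
  case Hz: (h zt) Hc => [c|] Hc; last by [].
  simpl in Hc.
  have Hs := Hstep k zt; rewrite -/x1 -/g -/kap Hx1 Hz in Hs; cbn [ele eplus] in Hs.
  have Ez : vsub zt (x k) = vadd e (vscale t w).
    by apply: vext => i; rewrite /zt /e /w /vsub /vadd /vscale; ring.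
  rewrite Ez -/e !norm_sq exp_sq exp_lin in Hs.
  apply: (Rmult_le_reg_l t); first lra.
  nra.
set S := sum_f_R0 (fun i => norm (Dx x k i) ^ 2) tau.
have HS0 : 0 <= S by apply: cond_pos_sum => i; apply: pow2_ge_0.
have Hn : forall n, f n x1 <= f n y + inner (gradf n (x (k - tau_k k n)%N)) (vsub x1 y)
                      + Ln n / 2 * ((INR tau + 1) * S).
  move=> n; set z := x (k - tau_k k n)%N.
  have H1 := descent z x1 (Hgrad n) (Hlip n).
  have H2 := grad_ineq y (Hconv n) (Hgrad n z).
  have Ein : inner (gradf n z) (vsub x1 z)
      = inner (gradf n z) (vsub x1 y) + inner (gradf n z) (vsub y z).
    rewrite -inner_addr; congr inner.
    by apply: vext => i; rewrite /vadd /vsub; ring.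
  have H3 : Ln n / 2 * norm (vsub x1 z) ^ 2 <= Ln n / 2 * ((INR tau + 1) * S).
    case: (Rle_lt_dec 0 (Ln n)) => HL.
      apply: Rmult_le_compat_l; first lra.
      rewrite norm_sq; apply: (Rle_trans _ _ _ (tele x k (tau_k k n))).
      have Hm := Htau k n.
      have Hle : INR (tau_k k n) <= INR tau by apply: le_INR; apply/leP.
      have HSm : sum_f_R0 (fun i => norm (Dx x k i) ^ 2) (tau_k k n) <= S.
        rewrite /S -(subnKC Hm); apply: sum_mono => i; apply: pow2_ge_0.
      have := cond_pos_sum (fun i => norm (Dx x k i) ^ 2) (tau_k k n) (fun i => pow2_ge_0 _).
      have := pos_INR (tau_k k n).
      move=> *; apply: Rmult_le_compat; lra.
    have Z0 : forall u : vec d, norm u = 0.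
      move=> u; have := Hlip n u vzero.
      have -> : vsub u vzero = u by apply: vext => i; rewrite /vsub /vzero; ring.
      have := norm_ge0 u; have := norm_ge0 (vsub (gradf n u) (gradf n vzero)).
      nra.
    have -> : S = 0 by rewrite /S; apply: sum_eq_R0 => i _; rewrite Z0; ring.
    rewrite Z0; lra.
  lra.
have HF : Fsum f x1 <= Fsum f y + inner g (vsub x1 y) + L / 2 * ((INR tau + 1) * S).
  rewrite /Fsum.
  have -> : inner g (vsub x1 y)
     = \big[Rplus/0]_(n < N) inner (gradf n (x (k - tau_k k n)%N)) (vsub x1 y).
    rewrite /g /piag_grad.
    exact: (big_morph (fun v => inner v (vsub x1 y)) (fun a b => inner_addl a b (vsub x1 y)) (inner0 _)).
  have -> : L / 2 * ((INR tau + 1) * S)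
     = \big[Rplus/0]_(n < N) (Ln n / 2 * ((INR tau + 1) * S)).
    rewrite /L.
    set C := (INR tau + 1) * S.
    have Hm : forall a b, (a + b) / 2 * C = a / 2 * C + b / 2 * C by move=> *; field.
    have H0 : 0 / 2 * C = 0 by field.
    exact: (big_morph (fun s => s / 2 * C) Hm H0).
  rewrite -!big_split; apply: sum_le => n /=; exact: Hn.
have ED : piag_Delta L tau x k = L / 2 * ((INR tau + 1) * S) by rewrite /piag_Delta /S /Dx; field.
have E1 : vsub y (x k) = vadd e w by apply: vext => i; rewrite /e /w /vadd /vsub; ring.
have E2 : vsub x1 y = vscale (-1) w by apply: vext => i; rewrite /w /vscale /vsub; ring.
cbn [ele eplus]; rewrite ED E1 !norm_sq exp_sq2.
rewrite E2 inner_scaler in HF.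
lra.
Qed.
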